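(* Let $\varphi\colon[\mathbb{F}_2,\mathbb{F}_2]\to\mathbb{Z}$ be the homomorphism defined below. Then $\varphi(g)=\varphi(hgh^{-1})$ for all $g\in[\mathbb{F}_2,\mathbb{F}_2]$ and all $h\in\mathbb{F}_2$.
   Context: $\mathbb{F}_2$ is the free group on $x,y$. Let $\tilde K$ be the graph with vertex set $\mathbb{Z}^2$ and oriented edges $x^iy^jX$ from $(i,j)$ to $(i+1,j)$ and $x^iy^jY$ from $(i,j)$ to $(i,j+1)$ (the universal abelian cover of the wedge of two circles). A $1$-chain is written $\alpha=P_\alpha(x,y)X+Q_\alpha(x,y)Y$ with $P_\alpha,Q_\alpha$ integer Laurent polynomials (the coefficient of $x^iy^j$ in $P_\alpha$ is the coefficient of the edge $x^iy^jX$, similarly for $Q_\alpha$). For $g\in[\mathbb{F}_2,\mathbb{F}_2]$ written as a word in $x^{\pm1},y^{\pm1}$, the associated cycle $\alpha_g$ is the $1$-cycle traced by the lattice path starting at $(0,0)$ in which a letter $x$ (resp. $x^{-1}$, $y$, $y^{-1}$) moves by $(1,0)$ (resp. $(-1,0)$, $(0,1)$, $(0,-1)$) along the corresponding edge, each edge counted with sign $+1$ if traversed in its orientation and $-1$ otherwise; this is a closed path since $g$ has zero exponent sums, and its homology class depends only on $g$. Let $f_\alpha(y)=P_\alpha(1,y)$. Define $\varphi(g)=f_{\alpha_g}'(1)$; this is a homomorphism $[\mathbb{F}_2,\mathbb{F}_2]\to\mathbb{Z}$ (e.g. $\alpha_{[x,y]}=(1-y)X+(x-1)Y$ and $\varphi([x,y])=-1$,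 where $[g,h]=ghg^{-1}h^{-1}$). *)

(* Defs.v *)
From mathcomp Require Import all_boot all_order all_algebra.
Set Implicit Arguments. Unset Strict Implicit. Unset Printing Implicit Defensive.
Import GRing.Theory Num.Theory.
Local Open Scope ring_scope.

Inductive letter := Lx | Lxi | Ly | Lyi.
Definition word := seq letter.

(* Group operations on words (words represent elements of F_2; the
   product is concatenation and the inverse is reversed inverted letters). *)
Definition inv_letter (l : letter) : letter :=
  match l with Lx => Lxi | Lxi => Lx | Ly => Lyi | Lyi => Ly end.
Definition winv (w : word) : word := rev (map inv_letter w).

(* Exponent sums; g in [F_2,F_2] iff both vanish (kernel of abelianization). *)
Definition letter_ex (l : letter) : int :=
  match l with Lx => 1 | Lxi => -1 | _ => 0 end.
Definition letter_ey (l : letter) : int :=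
  match l with Ly => 1 | Lyi => -1 | _ => 0 end.
Definition exp_x (w : word) : int := \sum_(l <- w) letter_ex l.
Definition exp_y (w : word) : int := \sum_(l <- w) letter_ey l.
Definition in_commutator (w : word) : Prop := exp_x w = 0 /\ exp_y w = 0.

(* Oriented edges of the lattice graph: x^i y^j X (isX = true) from (i,j) to
   (i+1,j), and x^i y^j Y (isX = false) from (i,j) to (i,j+1). *)
Record edge := Edge { e_i : int; e_j : int; e_isX : bool }.

Definition chain := seq (edge * int).

Definition letter_edge (i j : int) (l : letter) : edge * int :=
  match l with
  | Lx => (Edge i j true, 1)
  | Lxi => (Edge (i - 1) j true, -1)
  | Ly => (Edge i j false, 1)
  | Lyi => (Edge i (j - 1) false, -1)
  end.

Fixpoint path_chain (i j : int) (w : word) : chain :=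
  match w with
  | [::] => [::]
  | l :: w' => letter_edge i j l :: path_chain (i + letter_ex l) (j + letter_ey l) w'
  end.

Definition alpha (g : word) : chain := path_chain 0 0 g.

(* Coefficient of x^i y^j in P_alpha (coefficient of the edge x^i y^j X). *)
Definition P_coef (a : chain) (i j : int) : int :=
  \sum_(c <- a | [&& e_i c.1 == i, e_j c.1 == j & e_isX c.1]) c.2.

(* f_alpha(y) = P_alpha(1,y) = sum_j (sum_i P_coef a i j) y^j, a Laurent
   polynomial in y; its derivative at y = 1 is sum_j j * (sum_i P_coef a i j).
   Since a is a finite formal sum, this equals the sum over the X-edge terms
   of the chain of (height j) * (coefficient). *)
Definition f_deriv_at1 (a : chain) : int :=
  \sum_(c <- a | c.1.(e_isX)) c.1.(e_j) * c.2.

Definition phi (g : word) : int := f_deriv_at1 (alpha g).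

(* Main.v *)
Require Import Defs.
From mathcomp Require Import all_boot all_order all_algebra.
From mathcomp Require Import ring.
Local Open Scope ring_scope.
Import GRing.Theory.

Definition dl (l : letter) (j : int) : int :=
  match l with Lx => j | Lxi => - j | _ => 0 end.

Fixpoint Dw (j : int) (w : word) : int :=
  match w with [::] => 0 | l :: w' => dl l j + Dw (j + letter_ey l) w' end.

Lemma fD (i j : int) w : f_deriv_at1 (path_chain i j w) = Dw j w.
Proof.
elim: w i j => [|l w IH] i j; first by rewrite /f_deriv_at1 big_nil.
rewrite /f_deriv_at1 /= big_cons -/(f_deriv_at1 _) IH.
by case: l => /=; rewrite ?mulr1 ?mulrN1 ?add0r.
Qed.

Lemma ey_cons l w : exp_y (l :: w) = letter_ey l + exp_y w.
Proof. by rewrite /exp_y big_cons. Qed.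
Lemma ex_cons l w : exp_x (l :: w) = letter_ex l + exp_x w.
Proof. by rewrite /exp_x big_cons. Qed.
Lemma ey_nil : exp_y [::] = 0. Proof. by rewrite /exp_y big_nil. Qed.
Lemma ex_nil : exp_x [::] = 0. Proof. by rewrite /exp_x big_nil. Qed.

Lemma Dw_cat j u v : Dw j (u ++ v) = Dw j u + Dw (j + exp_y u) v.
Proof.
elim: u j => [|l u IH] j /=.
  by rewrite ey_nil addr0 add0r.
by rewrite IH ey_cons !addrA.
Qed.

Lemma Dw_shift j w : Dw j w = Dw 0 w + j * exp_x w.
Proof.
elim: w j => [|l w IH] j /=; first by rewrite ex_nil mulr0 addr0.
rewrite IH [Dw (0 + _) w]IH ex_cons.
case: l => /=; ring.
Qed.

Lemma Dw_inv j w : Dw j w + Dw (j + exp_y w) (winv w) = 0.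
Proof.
elim: w j => [|l w IH] j /=; first by rewrite addr0.
rewrite /winv /= rev_cons -cats1 -/(winv w) Dw_cat /=.
have := IH (j + letter_ey l).
rewrite ey_cons.
have ->: exp_y (winv w) = - exp_y w.
  elim: w {IH} => [|l' w' IH']; first by rewrite /winv /= ey_nil oppr0.
  rewrite /winv /= rev_cons /exp_y -cats1 big_cat /= big_cons big_nil -/(exp_y _).
  rewrite -/(winv w') IH' /exp_y big_cons -/(exp_y w').
  by case: l' => /=; ring.
move=> H.
have E: j + (letter_ey l + exp_y w) + - exp_y w = j + letter_ey l by ring.
rewrite addrA E.
rewrite (addrA j) -(addrA (dl l j)) H addr0 addr0.
case: l {H E} => /=; ring.
Qed.

Theorem lemma2p2 (g h : word) :
  in_commutator g -> phi (h ++ g ++ winv h) = phi g.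
Proof.
case=> Hx Hy; rewrite /phi /alpha !fD !Dw_cat (Dw_shift (0 + exp_y h) g).
rewrite Hx Hy mulr0 !addr0 !add0r.
have := Dw_inv 0 h; rewrite add0r => H.
rewrite addrCA H addr0 //.
Qed.
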